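(* There exists a temporal graph $\mathcal G$ (in the ''strict'' setting, i.e. with strict journeys) such that no simple temporal graph $\mathcal H$ has a strict-journey reachability graph isomorphic to $\mathcal C(\mathcal G)$. (For instance, $\mathcal G$ the path $a-b-c-d$ with $\lambda(ab)=\{1\}$, $\lambda(bc)=\{1,2\}$, $\lambda(cd)=\{2\}$.)
   Context: A temporal graph is a triple $\mathcal G=(V,E,\lambda)$ where $V$ is a finite vertex set, $E$ is a set of undirected edges on $V$, and $\lambda:E\to 2^{\mathbb N}\setminus\{\emptyset\}$ assigns to each edge a nonempty set of presence times. The footprint of $\mathcal G$ is the static graph $(V,E)$. A contact is a pair $(e,t)$ with $e\in E$ and $t\in\lambda(e)$. A journey from $u$ to $v$ is a sequence of contacts $(e_1,t_1),\dots,(e_k,t_k)$, $k\ge 1$, such that $e_1,\dots,e_k$ form a path from $u$ to $v$ in the footprint and $t_1\le t_2\le\dots\le t_k$ (a non-strict journey); it is strict if $t_1<t_2<\dots<t_k$. $\mathcal G$ is simple if $|\lambda(e)|=1$ for every edge $e$. The reachability graph $\mathcal C(\mathcal G)$ (with respect to a chosen journey notion) is the directed graph on $V$ having an arc $(u,v)$, $u\neq v$, if and only if there is a journey from $u$ to $v$. Reachability graphs are compared up to isomorphism of directed graphs. *)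

(* Defs.v *)
From mathcomp Require Import all_boot.
Set Implicit Arguments. Unset Strict Implicit. Unset Printing Implicit Defensive.

(* A temporal graph on a finite vertex type V:
   - edge : the (undirected) footprint edge relation, symmetric, irreflexive;
   - lab u v t : time t belongs to lambda({u,v}); symmetric in u v, only on
     edges, and nonempty on every edge. *)
Record tgraph (V : finType) := TGraph {
  edge : rel V;
  lab : V -> V -> nat -> bool
}.

Definition valid_tgraph (V : finType) (G : tgraph V) : Prop :=
  (forall u v, edge G u v = edge G v u) /\
  (forall u, ~~ edge G u u) /\
  (forall u v t, lab G u v t = lab G v u t) /\
  (forall u v t, lab G u v t -> edge G u v) /\
  (forall u v, edge G u v -> exists t, lab G u v t).

Definition simple_tgraph (V : finType) (G : tgraph V) : Prop :=
  forall u v, edge G u v -> exists t, forall t', lab G u v t' <-> t' = t.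

(* A strict journey from x: a sequence p of (vertex, time) pairs; the i-th
   pair (w_i, t_i) means that the i-th contact is the edge {w_{i-1}, w_i}
   (with w_0 = x) at time t_i. *)
Fixpoint sjourney_from (V : finType) (G : tgraph V) (x : V) (tprev : option nat)
    (p : seq (V * nat)) : bool :=
  match p with
  | [::] => true
  | (w, t) :: p' =>
      lab G x w t &&
      (if tprev is Some s then s < t else true) &&
      sjourney_from G w (Some t) p'
  end.

Definition strict_journey (V : finType) (G : tgraph V) (u v : V)
    (p : seq (V * nat)) : Prop :=
  [/\ p != [::], sjourney_from G u None p, uniq (u :: map fst p)
    & last u (map fst p) = v].

Definition sreach (V : finType) (G : tgraph V) (u v : V) : Prop :=
  u <> v /\ exists p, strict_journey G u v p.

Definition digraph_iso (V W : finType) (R : V -> V -> Prop) (S : W -> W -> Prop)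
  : Prop :=
  exists f : V -> W, bijective f /\ forall u v, R u v <-> S (f u) (f v).

(* Main.v *)
Require Import Defs.
From mathcomp Require Import all_boot.
From mathcomp Require Import zify.

Definition labn (a b t : nat) : bool :=
  match a, b with
  | 0, 1 | 1, 0 => t == 1
  | 1, 2 | 2, 1 => (t == 1) || (t == 2)
  | 2, 3 | 3, 2 => t == 2
  | _, _ => false
  end.

Definition G0 : tgraph 'I_4 :=
  TGraph (fun u v : 'I_4 => labn u v 1 || labn u v 2)
         (fun u v : 'I_4 => labn u v).

Definition o0 : 'I_4 := @Ordinal 4 0 isT.
Definition o1 : 'I_4 := @Ordinal 4 1 isT.
Definition o2 : 'I_4 := @Ordinal 4 2 isT.
Definition o3 : 'I_4 := @Ordinal 4 3 isT.

Ltac cord u := case: u => [[|[|[|[|?]]]] ?] //.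

Lemma validG0 : valid_tgraph G0.
Proof.
split; [|split; [|split; [|split]]].
- by move=> u v; cord u; cord v.
- by move=> u; cord u.
- by move=> u v t; cord u; cord v.
- by move=> u v t; cord u; cord v.
- move=> u v /orP [] H; [exists 1 | exists 2]; exact H.
Qed.

Lemma negG0 u v : (val u, val v) \in [:: (2,0); (0,3); (3,1)] ->
  ~ sreach G0 u v.
Proof.
cord u; cord v; rewrite ?inE //= => _ [_ [p [Hp Hj Hu Hl]]];
move: Hl Hu Hj; rewrite /=;
case: p Hp => [|[w1 t1] [|[w2 t2] [|[w3 t3] [|[w4 t4] p]]]] //= _;
  cord w1; try cord w2; try cord w3; try cord w4;
  move=> /(congr1 val) //= ; rewrite /= ?inE /=;
  repeat (let h := fresh in move=> /andP [h]; move: h);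
  rewrite /=; lia.
Qed.

Lemma posG0_02 : sreach G0 o0 o2.
Proof. split=> //; exists [:: (o1, 1); (o2, 2)]; by split. Qed.
Lemma posG0_13 : sreach G0 o1 o3.
Proof. split=> //; exists [:: (o2, 1); (o3, 2)]; by split. Qed.

Lemma adjG0 u v : sreach G0 u v -> sreach G0 v u -> edge G0 u v.
Proof.
move=> H1 H2.
have N := negG0.
move: H1 H2; cord u; cord v => H1 H2 //;
  try (by case: H1 => F _; exfalso; apply: F; apply: val_inj);
  try (by exfalso; apply: (N _ _ _ H1)); by exfalso; apply: (N _ _ _ H2).
Qed.

Lemma nb0 k : edge G0 o0 k -> k = o1.
Proof. by cord k => _; apply: val_inj. Qed.
Lemma nb1 k : edge G0 o1 k -> k = o0 \/ k = o2.
Proof. by cord k => _; [left|right]; apply: val_inj. Qed.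
Lemma nb2 k : edge G0 o2 k -> k = o1 \/ k = o3.
Proof. by cord k => _; [left|right]; apply: val_inj. Qed.

Theorem mainTheorem2 :
  exists (V : finType) (G : tgraph V),
    valid_tgraph G /\
    forall (W : finType) (H : tgraph W),
      valid_tgraph H -> simple_tgraph H ->
      ~ digraph_iso (sreach G) (sreach H).
Proof.
exists 'I_4, G0; split; first exact: validG0.
move=> W H [Hsym [Hirr [Hlsym [Hle Hne]]]] Hsimp [f [[g fK gK] Hiso]].
have finj := can_inj fK.
have edgeH x y : edge H x y -> edge G0 (g x) (g y).
  move=> e; apply: adjG0; apply/Hiso; rewrite !gK.
  - split; first by move=> E; move: (Hirr x); rewrite {2}E e.
    have [t Ht] := Hne _ _ e.
    exists [:: (y, t)]; split => //=; first by rewrite Ht.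
    by rewrite inE andbT; apply/eqP => E; move: (Hirr x); rewrite {2}E e.
  - rewrite Hsym in e.
    split; first by move=> E; move: (Hirr x); rewrite -{1}E e.
    have [t Ht] := Hne _ _ e.
    exists [:: (x, t)]; split => //=; first by rewrite Ht.
    by rewrite inE andbT; apply/eqP => E; move: (Hirr x); rewrite -{1}E e.
have labE x y t : lab H x y t -> edge G0 (g x) (g y) by move/Hle/edgeH.
set a := f o0; set b := f o1; set c := f o2; set d := f o3.
have ga : g a = o0 by rewrite /a fK.
have gb : g b = o1 by rewrite /b fK.
have gc : g c = o2 by rewrite /c fK.
have gd : g d = o3 by rewrite /d fK.
have eqf k x : g x = k -> x = f k by move=> <-; rewrite gK.
have neqf i j : i != j -> f i != f j by move=> ne; rewrite (inj_eq finj).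
have [t1 [t2 [L1 L2 T12]]] : exists t1 t2, [/\ lab H a b t1, lab H b c t2 & t1 < t2].
  have /Hiso [_ [p [Hp Hj Hu Hl]]] := posG0_02.
  case: p Hp Hj Hu Hl => [|[w1 s1] p1] //= _ /andP [/andP [L1 _] Hj] Hu Hl.
  have := labE _ _ _ L1; rewrite ga => /nb0 /eqf Ew1; subst w1.
  case: p1 Hj Hu Hl => [|[w2 s2] p2] /=.
    by move=> _ _ E; move: (neqf o1 o2 isT); rewrite E eqxx.
  move=> /andP [/andP [L2 T] _] Hu Hl.
  have := labE _ _ _ L2; rewrite gb => /nb1 [] /eqf Ew2; subst w2.
    by move: Hu => /= /andP [/negP []]; rewrite !inE eqxx !orbT.
  by exists s1, s2.
have [t2' [t3 [L2' L3 T23]]] : exists t1 t2, [/\ lab H b c t1, lab H c d t2 & t1 < t2].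
  have /Hiso [_ [p [Hp Hj Hu Hl]]] := posG0_13.
  case: p Hp Hj Hu Hl => [|[w1 s1] p1] //= _ /andP [/andP [L1' _] Hj] Hu Hl.
  have := labE _ _ _ L1'; rewrite gb => /nb1 [] /eqf Ew1; subst w1.
    case: p1 Hj Hu Hl => [|[w2 s2] p2] /=.
      by move=> _ _ E; move: (neqf o0 o3 isT); rewrite E eqxx.
    move=> /andP [/andP [L2' T] _] Hu Hl.
    have := labE _ _ _ L2'; rewrite ga => /nb0 /eqf Ew2; subst w2.
    by move: Hu => /= /andP [/negP []]; rewrite !inE eqxx !orbT.
  case: p1 Hj Hu Hl => [|[w2 s2] p2] /=.
    by move=> _ _ E; move: (neqf o2 o3 isT); rewrite E eqxx.
  move=> /andP [/andP [L2' T] _] Hu Hl.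
  have := labE _ _ _ L2'; rewrite gc => /nb2 [] /eqf Ew2; subst w2.
    by move: Hu => /= /andP [/negP []]; rewrite !inE eqxx !orbT.
  by exists s1, s2.
have Et : t2' = t2.
  have [t Ht] := Hsimp _ _ (Hle _ _ _ L2).
  by rewrite (proj1 (Ht _) L2') (proj1 (Ht _) L2).
subst t2'.
have : sreach H a d.
  split; first by apply/eqP; exact: neqf.
  exists [:: (b, t1); (c, t2); (d, t3)]; split => //=.
    by rewrite L1 L2 L3 T12 T23.
  rewrite !inE !negb_or !neqf //.
move/Hiso => R.
by apply: (@negG0 o0 o3 isT).
Qed.
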